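(* Let $G$ be a graph of order $n\ge2$ with no isolated vertices. Then $n-\gamma_2(G)\le\operatorname{ZIR}(G)\le n-\gamma(G)$, and both bounds are sharp.
   Context: $\gamma(G)$ is the domination number (minimum size of a set $D$ with every vertex in $D$ or adjacent to a vertex of $D$). A 2-dominating set is a set $D$ such that every vertex not in $D$ is adjacent to at least two vertices of $D$; $\gamma_2(G)$ is the minimum size of a 2-dominating set. A nonempty $F\subseteq V(G)$ is a fort if every $v\notin F$ has $|N(v)\cap F|\ne1$. A private fort of $x\in S$ relative to $S$ is a fort $F$ with $S\cap F=\{x\}$; $S$ is a ZIr-set if every element of $S$ has a private fort. $\operatorname{ZIR}(G)$ is the maximum cardinality of an inclusion-maximal ZIr-set. *)

(* Defs.v *)
From mathcomp Require Import all_boot.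
Set Implicit Arguments. Unset Strict Implicit. Unset Printing Implicit Defensive.

(* A finite simple graph: vertex type T : finType, adjacency e : rel T,
   assumed symmetric and irreflexive (as hypotheses of the theorem). *)

Section Graph.
Variables (T : finType) (e : rel T).

Definition nbh (v : T) : {set T} := [set u | e v u].

Definition simple_graph : Prop := symmetric e /\ irreflexive e.

Definition no_isolated : Prop := forall v : T, exists u : T, e v u.

Definition dominating (D : {set T}) : bool :=
  [forall v, (v \in D) || [exists u in D, e v u]].

Definition two_dominating (D : {set T}) : bool :=
  [forall v, (v \notin D) ==> (2 <= #|nbh v :&: D|)].

(* minimum cardinality (setT is always admissible, so #|T| is a safe default) *)
Definition domination_number : nat :=
  \big[minn/#|T|]_(D : {set T} | dominating D) #|D|.

Definition two_domination_number : nat :=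
  \big[minn/#|T|]_(D : {set T} | two_dominating D) #|D|.

Definition fort (F : {set T}) : bool :=
  (F != set0) && [forall v, (v \notin F) ==> (#|nbh v :&: F| != 1)].

Definition private_fort (S : {set T}) (x : T) (F : {set T}) : bool :=
  fort F && (S :&: F == [set x]).

Definition ZIr_set (S : {set T}) : bool :=
  [forall x in S, exists F, private_fort S x F].

Definition ZIR : nat := \max_(S : {set T} | maxset ZIr_set S) #|S|.

End Graph.

(* Main.v *)
Require Import Defs.
From mathcomp Require Import all_boot.
Set Implicit Arguments. Unset Strict Implicit. Unset Printing Implicit Defensive.

Section Aux.
Variables (I : finType) (P : pred I) (f : I -> nat) (m : nat).

Lemma bigmin_le i : P i -> \big[minn/m]_(j | P j) f j <= f i.
Proof.
move=> Pi; have : i \in index_enum I by rewrite mem_index_enum.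
elim: (index_enum I) => [|a s IH] //; rewrite inE big_cons.
case/orP => [/eqP <-|/IH h]; first by rewrite Pi geq_minl.
by case: ifP => // _; rewrite geq_min h orbT.
Qed.

Lemma bigmin_ge k : (forall i, P i -> k <= f i) -> k <= m ->
  k <= \big[minn/m]_(j | P j) f j.
Proof.
move=> H Hm; apply: (big_ind (fun x => k <= x)) => //.
  by move=> x y hx hy; rewrite leq_min hx hy.
Qed.

Lemma bigmin_att : \big[minn/m]_(j | P j) f j = m \/
  exists i, P i /\ \big[minn/m]_(j | P j) f j = f i.
Proof.
apply: (big_ind (fun x => x = m \/ exists i, P i /\ x = f i)); first by left.
  move=> x y hx hy; rewrite /minn; by case: ifP.
by move=> i Pi; right; exists i.
Qed.
End Aux.

Section Main.
Variables (T : finType) (e : rel T).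
Hypothesis (Hs : simple_graph e) (Hn : no_isolated e).

Lemma ZIr_dom S : ZIr_set e S -> dominating e (~: S).
Proof.
case: Hs => sym irr ZS; apply/forallP => x; rewrite inE.
case: (boolP (x \in S)) => xS //=.
case: (Hn x) => u xu.
case: (boolP (u \in S)) => uS; last by apply/existsP; exists u; rewrite inE uS xu.
have /existsP [F /andP [fF /eqP SF]] := forall_inP ZS u uS.
move: (fF) => /andP [_ /forallP /(_ x)].
have xF : x \notin F.
  apply/negP => xF.
  have : x \in S :&: F by rewrite inE xS.
  rewrite SF inE => /eqP ux; subst x.
  by rewrite irr in xu.
rewrite xF /= => hc.
have uin : u \in nbh e x :&: F.
  have : u \in S :&: F by rewrite SF inE.
  by rewrite !inE xu => /andP [].
have : 1 < #|nbh e x :&: F|.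
  rewrite ltn_neqAle eq_sym hc /= card_gt0; apply/set0Pn; by exists u.
case/(card_gt1P) => w1 [w2 [w1i w2i w12]].
have [w uw wi] : exists2 w, w != u & w \in nbh e x :&: F.
  case: (eqVneq w1 u) => h; last by exists w1.
  by exists w2 => //; rewrite -h eq_sym.
apply/existsP; exists w; rewrite !inE in wi *.
case/andP: wi => xw wF; rewrite xw andbT.
apply/negP => wS.
have : w \in S :&: F by rewrite inE wS.
by rewrite SF inE (negbTE uw).
Qed.

Lemma upper : ZIR e <= #|T| - domination_number e.
Proof.
apply/bigmax_leqP => S /maxsetp ZS.
have Hd := ZIr_dom ZS.
have h1 := @bigmin_le _ (dominating e) (fun D => #|D|) #|T| _ Hd.
rewrite -/(domination_number e) in h1.
have h2 := cardsC S.
by rewrite -h2 -addnBA // leq_addr.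
Qed.

Lemma twodom_ZIr D : two_dominating e D -> ZIr_set e (~: D).
Proof.
move=> TD; apply/forall_inP => x; rewrite inE => xD.
apply/existsP; exists (x |: D); apply/andP; split.
  apply/andP; split; first by apply/set0Pn; exists x; rewrite !inE eqxx.
  apply/forallP => v; apply/implyP; rewrite !inE negb_or => /andP [vx vD].
  have := implyP (forallP TD v) vD => h2.
  rewrite neq_ltn; apply/orP; right.
  apply: (leq_trans h2); apply: subset_leq_card; apply: setIS; exact: subsetUr.
apply/eqP/setP => y; rewrite !inE.
case: (eqVneq y x) => [->|yx] /=; first by rewrite xD.
by case: (y \in D).
Qed.

Lemma lower : #|T| - two_domination_number e <= ZIR e.
Proof.
have [h|[D [TD h]]] := @bigmin_att _ (two_dominating e) (fun D => #|D|) #|T|;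
  rewrite /two_domination_number h ?subnn //.
have [A MA sub] := maxset_exists (twodom_ZIr TD).
rewrite /ZIR; apply: (leq_trans _ (leq_bigmax_cond _ MA)).
rewrite -[D]setCK -cardsCs; exact: subset_leq_card.
Qed.
End Main.

Definition C4 : rel (bool * bool) := fun x y => (x.1 != y.1) != (x.2 != y.2).

Lemma C4_simple : simple_graph C4.
Proof.
split; first by move=> [a b] [c d]; rewrite /C4 /= (eq_sym a) (eq_sym b).
by move=> [a b]; rewrite /C4 /= !eqxx.
Qed.

Lemma C4_noiso : no_isolated C4.
Proof. by move=> [a b]; exists (~~ a, b); rewrite /C4 /=; case: a; case: b. Qed.

Lemma C4_card : #|{: bool * bool}| = 4.
Proof. by rewrite card_prod card_bool. Qed.

Lemma C4_g2 : two_domination_number C4 <= 2.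
Proof.
pose D := [set (true, true); (false, false)].
have TD : two_dominating C4 D.
  apply/forallP => v; apply/implyP => vD.
  have -> : nbh C4 v :&: D = D.
    apply/setIidPr/subsetP => u; move: vD; rewrite !inE.
    by case: v => [[] []]; case: u => [[] []].
  by rewrite cards2.
apply: leq_trans (@bigmin_le _ (two_dominating C4) (fun D => #|D|) _ _ TD) _.
by rewrite cards2.
Qed.

Lemma C4_g : 2 <= domination_number C4.
Proof.
apply: bigmin_ge; last by rewrite C4_card.
move=> D DD.
have [x xD] : exists x, x \in D.
  move/forallP: DD => /(_ (true,true)) /orP [h|/existsP [u /andP [h _]]];
  by eexists; exact h.
have [z zD zx] : exists2 z, z \in D & z != x.
  move/forallP: DD => /(_ (~~ x.1, ~~ x.2)) /orP [h|/existsP [u /andP [h hu]]].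
    by exists (~~ x.1, ~~ x.2) => //; case: x {xD h} => [[] []].
  exists u => //; apply/eqP => ux; subst u.
  by move: hu; rewrite /C4; case: x {xD h} => [[] []].
have -> : 2 = #|[set x; z]| by rewrite cards2 eq_sym zx.
by apply: subset_leq_card; apply/subsetP => w; rewrite !inE => /orP [] /eqP ->.
Qed.

Lemma C4_ZIR : ZIR C4 = 4 - two_domination_number C4 /\
               ZIR C4 = 4 - domination_number C4.
Proof.
have l := lower C4.
have u := upper C4_simple C4_noiso.
rewrite C4_card in l u.
have a := C4_g2; have b := C4_g.
have ab : 4 - domination_number C4 <= 4 - two_domination_number C4.
  by apply: leq_sub2l; apply: leq_trans a b.
split; apply/eqP; rewrite eqn_leq.
  by rewrite l (leq_trans u ab).
by rewrite u (leq_trans ab l).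
Qed.

Theorem proposition4p1 :
  (forall (T : finType) (e : rel T),
      simple_graph e -> 2 <= #|T| -> no_isolated e ->
      #|T| - two_domination_number e <= ZIR e <= #|T| - domination_number e)
  /\ (exists (T : finType) (e : rel T),
      [/\ simple_graph e, 2 <= #|T|, no_isolated e &
          ZIR e = #|T| - two_domination_number e])
  /\ (exists (T : finType) (e : rel T),
      [/\ simple_graph e, 2 <= #|T|, no_isolated e &
          ZIR e = #|T| - domination_number e]).
Proof.
split.
  by move=> T e Hs _ Hn; rewrite (lower e) (upper Hs Hn).
have [h1 h2] := C4_ZIR.
split; exists (bool * bool)%type, C4;
  by split; rewrite ?C4_card //; [exact: C4_simple | exact: C4_noiso].
Qed.
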